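(* Every stag hunt is weakly acyclic; that is, every weakly maximal state of a stag hunt is a pure Nash equilibrium. Equivalently, from every profile of a stag hunt there is a finite sequence of strictly profitable unilateral deviations ending at a pure Nash equilibrium.
   Context: A stag hunt is a game with players $I=\{1,\dots,n\}$, each with strategy set $S_i=\{A,D\}$, given by a constant $c\in\mathbb{R}$ and, for each $i$, a function $f_i$ defined on subsets $T\subseteq I$ with $i\in T$ that is strictly increasing with respect to inclusion ($T\subsetneq T'$ implies $f_i(T)<f_i(T')$). For a profile $s$ let $T(s)=\{j: s_j=A\}$; the payoffs are $u_i(s)=f_i(T(s))$ if $s_i=A$ and $u_i(s)=c$ if $s_i=D$. Moreover $f_i(I)>c$ for all $i$ (so everyone prefers the all-$A$ profile $A^n$) and $f_i(\{i\})<c$ for all $i$ (unilateral deviations from the all-$D$ profile $D^n$ are harmful). For a profile $s$ and $s_i'$, $(s_i',s_{-i})$ denotes $s$ with player $i$'s strategy replaced. A pure Nash equilibrium is $s$ with $u_i(s)\ge u_i(s_i',s_{-i})$ for all $i,s_i'$. The strict deployment graph has vertex set the profiles and an arc $(s,s')$ iff $s'=(s_i',s_{-i})$ for some $i$ with $u_i(s')>u_i(s)$. Define $s\succeq s'$ iff there is a directed path (possibly of length $0$) in this graph from $s'$ to $s$, and $s\succ s'$ iff $s\succeq s'$ and not $s'\succeq s$. A weakly maximal state is an $s^*$ with no $s$ satisfying $s\succ s^*$. A game is weakly acyclic if all its weakly maximal states are pure Nash equilibria. *)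

(* Defs.v *)
From HB Require Import structures.
From mathcomp Require Import all_boot all_order all_algebra.
From Stdlib Require Import Relations.
Set Implicit Arguments. Unset Strict Implicit. Unset Printing Implicit Defensive.
Import Order.TTheory GRing.Theory Num.Theory.
Local Open Scope ring_scope.

(* Strategies: A (stag / cooperate) and D (hare / defect). *)
Inductive strat := A | D.

Definition isA (a : strat) : bool := if a is A then true else false.

Definition profile (n : nat) := 'I_n -> strat.

Definition upd (n : nat) (s : profile n) (i : 'I_n) (a : strat) : profile n :=
  fun j => if j == i then a else s j.

Definition Tset (n : nat) (s : profile n) : {set 'I_n} := [set j | isA (s j)].

Definition payoff (R : realFieldType) (n : nat) (c : R)
  (f : 'I_n -> {set 'I_n} -> R) (i : 'I_n) (s : profile n) : R :=
  if s i is A then f i (Tset s) else c.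

(* Stag hunt hypotheses on (c, f).  f i is only meaningful on sets containing i. *)
Definition is_stag_hunt (R : realFieldType) (n : nat) (c : R)
  (f : 'I_n -> {set 'I_n} -> R) : Prop :=
  [/\ (forall i (T T' : {set 'I_n}), i \in T -> T \proper T' -> f i T < f i T'),
      (forall i, c < f i [set: 'I_n]) &
      (forall i, f i [set i] < c)].

Section Game.
Variables (R : realFieldType) (n : nat) (u : 'I_n -> profile n -> R).

Definition pure_nash (s : profile n) : Prop :=
  forall i a, u i (upd s i a) <= u i s.

Definition arc (s s' : profile n) : Prop :=
  exists i a, s' = upd s i a /\ u i s < u i s'.

Definition succeq (s s' : profile n) : Prop := clos_refl_trans _ arc s' s.

Definition succ (s s' : profile n) : Prop := succeq s s' /\ ~ succeq s' s.

Definition weakly_maximal (s : profile n) : Prop := ~ exists s', succ s' s.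

Definition weakly_acyclic : Prop :=
  forall s, weakly_maximal s -> pure_nash s.
End Game.

(* Main.v *)
Require Import Defs.
From mathcomp Require Import all_boot all_order all_algebra.
From mathcomp Require Import zify.
From Stdlib Require Import Relations Classical.
Set Implicit Arguments. Unset Strict Implicit. Unset Printing Implicit Defensive.
Import Order.TTheory GRing.Theory Num.Theory.
Local Open Scope ring_scope.

Lemma Tset_upd (n : nat) (s : profile n) i a :
  Tset (upd s i a) = if isA a then i |: Tset s else Tset s :\ i.
Proof.
apply/setP => j; rewrite /Tset; case: a => /=; rewrite !inE /upd;
by case: eqP.
Qed.

Lemma Tset_updA (n : nat) (s : profile n) i : s i = A -> Tset (upd s i A) = Tset s.
Proof.
move=> h; apply/setP => j; rewrite /Tset !inE /upd; case: eqP => // ->.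
by rewrite h.
Qed.

Lemma sink_eq (R : realFieldType) (n : nat) (u : 'I_n -> profile n -> R) (t s : profile n) :
  pure_nash u t -> clos_refl_trans _ (Defs.arc u) t s -> s = t.
Proof.
move=> hN h0; have h := clos_rt_rt1n _ _ _ _ h0; clear h0; inversion h; first by [].
subst. case: H => i [a [-> hlt]].
by move: (hN i a); rewrite leNgt hlt.
Qed.

Section Proof.
Variables (R : realFieldType) (n : nat) (c : R) (f : 'I_n -> {set 'I_n} -> R).
Hypothesis mono : forall i (T T' : {set 'I_n}), i \in T -> T \proper T' -> f i T < f i T'.

Let u := payoff c f.

Definition Inv (s : profile n) := forall i, s i = A -> c <= f i (Tset s).

Lemma card_T (s : profile n) : (#|Tset s| <= n)%N.
Proof. by rewrite -[X in (_ <= X)%N](card_ord n) max_card. Qed.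

Lemma phase2 k : forall s : profile n, (n - #|Tset s| <= k)%N -> Inv s ->
  exists t, clos_refl_trans _ (Defs.arc u) s t /\ pure_nash u t.
Proof.
elim: k => [|k IH] s hk hI.
- exists s; split; first exact: rt_refl.
  move=> i a; rewrite /u /payoff.
  have hT : Tset s = [set: 'I_n].
    apply/eqP; rewrite eqEcard subsetT cardsT card_ord; lia.
  case hs: (s i); case: a; rewrite /upd eqxx //.
  + by rewrite Tset_updA.
  + exact: hI.
  + exfalso; move: (in_setT i); rewrite -hT /Tset inE hs //.
- case: (classic (pure_nash u s)) => hN.
    by exists s; split => //; apply: rt_refl.
  have [i [a hlt]] : exists i a, u i s < u i (upd s i a).
    apply: NNPP => hne; apply: hN => i a; rewrite leNgt; apply/negP => hl.
    by apply: hne; exists i, a.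
  move: hlt; rewrite /u /payoff /upd eqxx.
  case hs: (s i); case: a => hlt.
  + by move: hlt; rewrite -/(upd s i A) Tset_updA // ltxx.
  + by move: (hI i hs); rewrite leNgt hlt.
  + have hi : i \notin Tset s by rewrite /Tset inE hs.
    have hTs : Tset (upd s i A) = i |: Tset s by rewrite Tset_upd.
    have [t [ht1 ht2]] : exists t, clos_refl_trans _ (Defs.arc u) (upd s i A) t /\ pure_nash u t.
      apply: IH.
        rewrite hTs cardsU1 hi; move: (card_T (upd s i A)); rewrite hTs cardsU1 hi; lia.
      move=> j; rewrite /upd; case: eqP => [->|hj].
        by move=> _; apply: ltW.
      move=> hsj; rewrite -/(upd s i A) hTs.
      apply/ltW/(le_lt_trans (y := f j (Tset s))); first exact: hI.
      apply: mono; first by rewrite /Tset inE hsj.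
      by apply: properUr; rewrite sub1set.
    exists t; split => //; apply: rt_trans ht1; apply: rt_step.
    by exists i, A; split => //; rewrite /u /payoff /upd eqxx hs.
  + by move: hlt; rewrite ltxx.
Qed.

Lemma phase1 k : forall s : profile n, (#|Tset s| <= k)%N ->
  exists t, clos_refl_trans _ (Defs.arc u) s t /\ pure_nash u t.
Proof.
elim: k => [|k IH] s hk;
  case: (boolP [exists i, isA (s i) && (f i (Tset s) < c)]) => hE.
- case/existsP: hE => i /andP [hA _]; move: hA; case hs: (s i) => // _.
  have hin : i \in Tset s by rewrite /Tset inE hs.
  by move: hk; rewrite leqn0 cards_eq0 => /eqP h; move: hin; rewrite h inE.
- apply: (@phase2 (n - #|Tset s|)) => // i hs; rewrite leNgt; apply/negP => hl.
  by move/negP: hE; apply; apply/existsP; exists i; rewrite hs hl.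
- case/existsP: hE => i /andP [hA hl]; move: hA; case hs: (s i) => // _.
  have hin : i \in Tset s by rewrite /Tset inE hs.
  have hT : Tset (upd s i D) = Tset s :\ i by rewrite Tset_upd.
  have [t [ht1 ht2]] : exists t, clos_refl_trans _ (Defs.arc u) (upd s i D) t /\ pure_nash u t.
    apply: IH; move: hk; rewrite hT (cardsD1 i (Tset s)) hin /=; set m := #|_ :\ _|; lia.
  exists t; split => //; apply: rt_trans ht1; apply: rt_step.
  by exists i, D; split => //; rewrite /u /payoff /upd eqxx hs.
- apply: (@phase2 (n - #|Tset s|)) => // i hs; rewrite leNgt; apply/negP => hl.
  by move/negP: hE; apply; apply/existsP; exists i; rewrite hs hl.
Qed.
End Proof.

Theorem theorem4 (R : realFieldType) (n : nat) (c : R)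
  (f : 'I_n -> {set 'I_n} -> R) :
  is_stag_hunt c f -> weakly_acyclic (payoff c f).
Proof.
case=> mono _ _ s hmax.
have [t [ht1 ht2]] := @phase1 R n c f mono _ s (leqnn _).
have hb : succeq (payoff c f) s t.
  apply: NNPP => hn; apply: hmax; exists t; split => //.
have -> : s = t by apply: (sink_eq ht2).
exact: ht2.
Qed.
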